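(* Let $X$ be one of $\mathbb{R}^d$, $\mathbb{S}^d$, or $\mathbb{H}^d$ with its standard metric, let $G$ be a discontinuous group of isometries of $X$, and let $x_0\in X$ have trivial stabilizer in $G$. Let $S=G x_0$ be the orbit of $x_0$. Then for every positive integer $n\le\#(S)$, the $n$-th Brillouin zone $B_n(x_0)$ (with respect to $S$) is a fundamental domain for the action of $G$ on $X$. Its boundary is a union of pieces of totally geodesic subspaces and equals the boundary of its interior.
   Context: For a metric space $(X,d)$, a discrete set $S$ and $x_0\in S$: $N_r(x)=\{y: d(x,y)<r\}$, $C_r(x)=\{y: d(x,y)=r\}$, $\#$ is cardinality; for $1\le n\le\#(S)$ and $x\in X$ with $r=d(x,x_0)$, $x\in B_n(x_0)$ iff $\#(N_r(x)\cap S)=m$ and $\#(C_r(x)\cap S)=\ell$ for some integers $m\ge0$, $\ell\ge1$ with $m+1\le n\le m+\ell$. *)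

(* Defs.v *)
From mathcomp Require Import all_boot all_order all_algebra.
From mathcomp Require Import all_classical all_reals all_analysis.
Set Implicit Arguments. Unset Strict Implicit. Unset Printing Implicit Defensive.
Import Order.TTheory GRing.Theory Num.Theory.
Local Open Scope classical_set_scope.
Local Open Scope ring_scope.
Local Open Scope card_scope.

(* The three model geometries: Euclidean space R^d, the sphere S^d, and
   hyperbolic space H^d (hyperboloid model). *)
Inductive geom := Euclid | Sphere | Hyperbolic.

Section Geometry.
Variable R : realType.

(* ambient dimension: R^d sits in R^d, S^d and H^d sit in R^(d+1) *)
Definition dim (k : geom) (d : nat) : nat :=
  if k is Euclid then d else d.+1.

Definition dotv n (u v : 'rV[R]_n) : R := \sum_(i < n) u 0 i * v 0 i.

Definition lorentz n (u v : 'rV[R]_n.+1) : R :=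
  - (u 0 ord0 * v 0 ord0) + \sum_(i < n.+1 | i != ord0) u 0 i * v 0 i.

Definition hacosh (t : R) : R := ln (t + Num.sqrt (t ^+ 2 - 1)).

Definition inspace (k : geom) (d : nat) : 'rV[R]_(dim k d) -> Prop :=
  match k as k0 return 'rV[R]_(dim k0 d) -> Prop with
  | Euclid => fun _ => True
  | Sphere => fun x => dotv x x = 1
  | Hyperbolic => fun x => lorentz x x = -1 /\ 0 < x 0 ord0
  end.

Definition ambient_dist (k : geom) (d : nat) :
    'rV[R]_(dim k d) -> 'rV[R]_(dim k d) -> R :=
  match k as k0 return 'rV[R]_(dim k0 d) -> 'rV[R]_(dim k0 d) -> R with
  | Euclid => fun x y => Num.sqrt (dotv (x - y) (x - y))
  | Sphere => fun x y => acos (dotv x y)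
  | Hyperbolic => fun x y => hacosh (- lorentz x y)
  end.

(* totally geodesic hypersurfaces (hyperplanes) of each model, as ambient sets:
   affine hyperplanes of R^d; great spheres S^d ∩ a^⊥ (a <> 0);
   hyperbolic hyperplanes H^d ∩ a^⊥_L with a space-like (a Lorentz-normal of
   a time-like linear model_hyperplane of R^(1,d)) *)
Definition ambient_hyperplane (k : geom) (d : nat) :
    set 'rV[R]_(dim k d) -> Prop :=
  match k as k0 return set 'rV[R]_(dim k0 d) -> Prop with
  | Euclid => fun H => exists (a : 'rV[R]_d) (b : R),
      a != 0 /\ H = [set x | dotv a x = b]
  | Sphere => fun H => exists (a : 'rV[R]_d.+1),
      a != 0 /\ H = [set x | dotv a x = 0]
  | Hyperbolic => fun H => exists (a : 'rV[R]_d.+1),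
      0 < lorentz a a /\ H = [set x | lorentz a x = 0]
  end.

Definition mpoint (k : geom) (d : nat) := {x : 'rV[R]_(dim k d) | inspace x}.

Definition geo_dist (k : geom) (d : nat) (x y : mpoint k d) : R :=
  ambient_dist (proj1_sig x) (proj1_sig y).

Definition model_hyperplane (k : geom) (d : nat) (H : set (mpoint k d)) : Prop :=
  exists A : set 'rV[R]_(dim k d), ambient_hyperplane A /\
    H = [set x | A (proj1_sig x)].

End Geometry.

Section MetricNotions.
Variables (R : realType) (T : Type) (dst : T -> T -> R).

Definition oball (x : T) (r : R) : set T := [set y | dst x y < r].
Definition sphere_at (x : T) (r : R) : set T := [set y | dst x y = r].

Definition minterior (A : set T) : set T :=
  [set x | exists2 e : R, 0 < e & oball x e `<=` A].
Definition mclosure (A : set T) : set T :=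
  [set x | forall e : R, 0 < e -> exists2 y, A y & dst x y < e].
Definition mclosed (A : set T) : Prop := mclosure A `<=` A.
Definition mboundary (A : set T) : set T := mclosure A `\` minterior A.

Definition brillouin (S : set T) (n : nat) (x0 : T) : set T :=
  [set x | exists m l : nat, (1 <= l)%N /\
     (oball x (dst x x0) `&` S) #= `I_m /\
     (sphere_at x (dst x x0) `&` S) #= `I_l /\
     (m + 1 <= n)%N /\ (n <= m + l)%N].

Definition misometry (g : T -> T) : Prop :=
  bijective g /\ forall x y, dst (g x) (g y) = dst x y.

Definition isometry_group (G : set (T -> T)) : Prop :=
  [/\ G id, (forall g h, G g -> G h -> G (g \o h)),
      (forall g, G g -> exists2 h, G h & (h \o g = id /\ g \o h = id))
    & (forall g, G g -> misometry g)].

(* discontinuous_group action: for every (closed) ball B only finitely many g in G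
   satisfy g B ∩ B <> ∅ (closed balls are compact in the model spaces and
   every compact set lies in such a ball) *)
Definition discontinuous_group (G : set (T -> T)) : Prop :=
  forall (x : T) (r : R), 0 < r ->
    finite_set [set g | G g /\ exists y, dst x y <= r /\ dst x (g y) <= r].

Definition gorbit (G : set (T -> T)) (x0 : T) : set T := (fun g => g x0) @` G.

Definition trivial_stabilizer (G : set (T -> T)) (x0 : T) : Prop :=
  forall g, G g -> g x0 = x0 -> g = id.

Definition fundamental_domain (G : set (T -> T)) (F : set T) : Prop :=
  [/\ mclosed F,
      (forall x, exists2 g, G g & (g @` F) x)
    & (forall g h, G g -> G h -> g <> h ->
         (g @` minterior F) `&` (h @` minterior F) = set0)].

Definition locally_finite (F : set (set T)) : Prop :=
  forall x, exists2 e : R, 0 < e &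
    finite_set [set H | F H /\ exists2 y, H y & dst x y < e].

End MetricNotions.

(* Main.v *)
From HB Require Import structures.
Require Import Defs.
From mathcomp Require Import all_boot all_order all_algebra finmap.
From mathcomp Require Import all_classical all_reals all_analysis.
From mathcomp Require Import ring lra zify.
Set Implicit Arguments. Unset Strict Implicit. Unset Printing Implicit Defensive.
Import Order.TTheory GRing.Theory Num.Theory.
Local Open Scope classical_set_scope.
Local Open Scope ring_scope.

Section Vec.
Variable R : realType.

Lemma dotvC n (u v : 'rV[R]_n) : dotv u v = dotv v u.
Proof. by rewrite /dotv; apply: eq_bigr => i _; rewrite mulrC. Qed.

Lemma dotvDl n (u v w : 'rV[R]_n) : dotv (u + v) w = dotv u w + dotv v w.
Proof. by rewrite /dotv -big_split; apply: eq_bigr => i _; rewrite mxE mulrDl. Qed.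

Lemma dotvZl n a (u v : 'rV[R]_n) : dotv (a *: u) v = a * dotv u v.
Proof. by rewrite /dotv mulr_sumr; apply: eq_bigr => i _; rewrite mxE mulrA. Qed.

Lemma dotvNl n (u v : 'rV[R]_n) : dotv (- u) v = - dotv u v.
Proof. by rewrite /dotv -sumrN; apply: eq_bigr => i _; rewrite mxE mulNr. Qed.

Lemma dotvBl n (u v w : 'rV[R]_n) : dotv (u - v) w = dotv u w - dotv v w.
Proof. by rewrite dotvDl dotvNl. Qed.

Lemma dotvDr n (u v w : 'rV[R]_n) : dotv w (u + v) = dotv w u + dotv w v.
Proof. by rewrite dotvC dotvDl !(dotvC w). Qed.

Lemma dotvZr n a (u v : 'rV[R]_n) : dotv v (a *: u) = a * dotv v u.
Proof. by rewrite dotvC dotvZl dotvC. Qed.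

Lemma dotvNr n (u v : 'rV[R]_n) : dotv v (- u) = - dotv v u.
Proof. by rewrite dotvC dotvNl dotvC. Qed.

Lemma dotvBr n (u v w : 'rV[R]_n) : dotv w (u - v) = dotv w u - dotv w v.
Proof. by rewrite dotvDr dotvNr. Qed.

Lemma dotv0l n (v : 'rV[R]_n) : dotv 0 v = 0.
Proof. by rewrite /dotv big1 // => i _; rewrite mxE mul0r. Qed.

Lemma dotv0r n (v : 'rV[R]_n) : dotv v 0 = 0.
Proof. by rewrite dotvC dotv0l. Qed.

Lemma dotvv_ge0 n (u : 'rV[R]_n) : 0 <= dotv u u.
Proof. by apply: sumr_ge0 => i _; rewrite -expr2 sqr_ge0. Qed.

Lemma dotvv_eq0 n (u : 'rV[R]_n) : dotv u u = 0 -> u = 0.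
Proof.
move=> h; apply/rowP => i; rewrite mxE.
have := @psumr_eq0P _ _ xpredT (fun i => u 0 i * u 0 i).
move=> /(_ (fun i _ => ltac:(by rewrite -expr2 sqr_ge0)) h i isT) /eqP.
by rewrite mulf_eq0 orbb => /eqP.
Qed.

Lemma dotvv_gt0 n (u : 'rV[R]_n) : u != 0 -> 0 < dotv u u.
Proof.
move=> h; rewrite lt_neqAle dotvv_ge0 andbT eq_sym.
by apply/eqP => /dotvv_eq0 /eqP; rewrite (negbTE h).
Qed.

Lemma quad_disc (A B C : R) : 0 <= C ->
  (forall t, 0 <= A + 2 * B * t + C * t ^+ 2) -> B ^+ 2 <= A * C.
Proof.
move=> C0 H; have [C0'|Cgt0] := eqVneq C 0.
  subst C; rewrite mulr0.
  have [B0|Bn0] := eqVneq B 0; first by rewrite B0 expr0n.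
  have := H (- (A + 1) / (2 * B)).
  have -> : A + 2 * B * (- (A + 1) / (2 * B)) + 0 * (- (A + 1) / (2 * B)) ^+ 2 = -1.
    by field.
  by rewrite ler0N1.
have Cp : 0 < C by rewrite lt_neqAle eq_sym Cgt0 C0.
have := H (- B / C).
have -> : A + 2 * B * (- B / C) + C * (- B / C) ^+ 2 = (A * C - B ^+ 2) / C.
  by field.
by rewrite pmulr_lge0 ?invr_gt0 // subr_ge0.
Qed.

Lemma cauchy_schwarz n (u v : 'rV[R]_n) : dotv u v ^+ 2 <= dotv u u * dotv v v.
Proof.
apply: quad_disc; first exact: dotvv_ge0.
move=> t; have := dotvv_ge0 (u + t *: v).
rewrite !dotvDl !dotvDr !dotvZl !dotvZr (dotvC v u).
by move=> h; apply: le_trans h _; rewrite le_eqVlt; apply/orP; left; apply/eqP; ring.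
Qed.

Lemma cs_abs n (u v : 'rV[R]_n) :
  `|dotv u v| <= Num.sqrt (dotv u u) * Num.sqrt (dotv v v).
Proof.
rewrite -sqrtrM ?dotvv_ge0 // -sqrtr_sqr ler_sqrt ?cauchy_schwarz //.
by rewrite mulr_ge0 ?dotvv_ge0.
Qed.

Lemma sum_ge_term (T : eqType) (s : seq T) (F : T -> R) c :
  (forall x, 0 <= F x) -> c \in s -> F c <= \sum_(x <- s) F x.
Proof.
move=> F0 cs; rewrite (big_rem c) //= lerDl.
by apply: sumr_ge0 => i _.
Qed.

Lemma avoid_hyp n (cs : seq 'rV[R]_n) :
  (forall c, c \in cs -> c != 0) -> exists w, forall c, c \in cs -> dotv w c != 0.
Proof.
elim: cs => [|c cs IH] H; first by exists 0.
have [w Hw] : exists w, forall c0, c0 \in cs -> dotv w c0 != 0.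
  by apply: IH => c0 hc; apply: H; rewrite inE hc orbT.
have cn0 : c != 0 by apply: H; rewrite mem_head.
have [wc0|wc0] := eqVneq (dotv w c) 0; last first.
  by exists w => c'; rewrite inE => /orP[/eqP->//|]; apply: Hw.
pose Sg := \sum_(c' <- cs) `|dotv c c'| / `|dotv w c'|.
have Sg0 : 0 <= Sg by apply: sumr_ge0 => i _; rewrite divr_ge0.
pose lam := 1 / (1 + Sg).
have lam0 : 0 < lam by rewrite divr_gt0 // ltr_pwDl.
exists (w + lam *: c) => c'; rewrite inE => /orP[/eqP->|hc'].
  rewrite dotvDl dotvZl wc0 add0r mulf_neq0 //; first by rewrite gt_eqF.
  by rewrite gt_eqF // dotvv_gt0.
rewrite dotvDl dotvZl.
have a0 := Hw c' hc'.
set a := dotv w c' in a0 *; set b := dotv c c'.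
have aP : 0 < `|a| by rewrite normr_gt0.
have hb : `|b| / `|a| <= Sg.
  by apply: (sum_ge_term (F := fun c' => `|dotv c c'| / `|dotv w c'|)) => // x; rewrite divr_ge0.
have lb : `|lam * b| < `|a|.
  rewrite normrM (gtr0_norm lam0) /lam mul1r.
  rewrite ltr_pdivrMl ?ltr_pwDl //.
  rewrite ler_pdivrMr // in hb.
  apply: (le_lt_trans hb); rewrite mulrDl mul1r ltr_pwDl //.
apply/eqP => h.
have : a = - (lam * b) by apply/eqP; rewrite -addr_eq0 h.
move=> ha; move: lb; rewrite ha normrN ltxx //.
Qed.

Lemma gap_exists (s : seq R) (a : R) : a \notin s ->
  exists2 del, 0 < del & forall b, b \in s -> del < `|b - a|.
Proof.
elim: s => [|b s IH]; first by move=> _; exists 1.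
rewrite inE negb_or => /andP[ab /IH[del d0 Hd]].
have bpos : 0 < `|b - a| by rewrite normr_gt0 subr_eq0 eq_sym.
exists (Num.min del (`|b - a| / 2)).
  by rewrite lt_min d0 divr_gt0.
move=> c; rewrite inE => /orP[/eqP->|cs].
  by rewrite gt_min; apply/orP; right; rewrite ltr_pdivrMr // ltr_pMr // ltr1n.
by rewrite gt_min Hd.
Qed.

Lemma count_lt_mono (s : seq R) (l m : R) : l <= m ->
  (count (fun x : R => (x < l)%R) s <= count (fun x : R => (x < m)%R) s)%N.
Proof. by move=> lm; apply: sub_count => x /= xl; apply: lt_le_trans xl lm. Qed.

Lemma rank_select (s : seq R) : uniq s -> forall k, (k <= size s)%N ->
  exists lam, lam \notin s /\ count (fun a => a < lam) s = k.
Proof.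
elim: s => [|a s IH] /=.
  by move=> _ k; rewrite leqn0 => /eqP->; exists 0.
move=> /andP[aNs us] k ks.
have [del d0 Hd] := gap_exists aNs.
pose c := count (fun x => x < a) s.
have eqm : count (fun x => x < a - del) s = c.
  apply: eq_in_count => b bs /=; apply/idP/idP => h.
    by apply: lt_trans h _; rewrite ltrBlDr ltrDl.
  have := Hd b bs; rewrite ltr0_norm ?subr_lt0 // opprB.
  by move=> ?; lra.
have eqp : count (fun x => x < a + del) s = c.
  apply: eq_in_count => b bs /=; apply/idP/idP => h; last first.
    by apply: lt_trans h _; rewrite ltrDl.
  rewrite ltNge; apply/negP => ab; have := Hd b bs.
  by rewrite ger0_norm ?subr_ge0 // => ?; lra.
have nas : forall l, l \notin s -> l != a -> l \notin a :: s.
  by move=> l h1 h2; rewrite inE negb_or h2.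
have notd : forall e, `|e| = del -> a + e \notin s.
  move=> e he; apply/negP => /Hd; have -> : a + e - a = e by ring.
  by rewrite he ltxx.
have [ck|ck] := eqVneq c k.
  exists (a - del); split.
    apply: nas; first by apply: (notd (- del)); rewrite normrN gtr0_norm.
    by apply/eqP => h; lra.
  have -> /= : (a < a - del) = false by apply/negbTE; rewrite -leNgt; lra.
  by rewrite add0n eqm.
have [ck1|ck1] := eqVneq c.+1 k.
  exists (a + del); split.
    apply: nas; first by apply: notd; rewrite gtr0_norm.
    by apply/eqP => h; lra.
  have -> /= : (a < a + del) = true by apply/idP; lra.
  by rewrite add1n eqp.
have csz : (c <= size s)%N by apply: count_size.
have [ltkc|ltck] := ltnP k c.
  have [l1 [l1s cl1]] := IH us k (leq_trans (ltnW ltkc) csz).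
  have l1a : l1 < a.
    rewrite ltNge; apply/negP => al1.
    by have := count_lt_mono s al1; rewrite cl1 leqNgt ltkc.
  exists l1; split; first by apply: nas => //; rewrite lt_eqF.
  by rewrite ltNge ltW //= add0n.
have kpos : (0 < k)%N by lia.
have ltck1 : (c.+1 < k)%N by lia.
have hk1 : (k.-1 <= size s)%N by lia.
have [l2 [l2s cl2]] := IH us k.-1 hk1.
have al2 : a < l2.
  rewrite ltNge; apply/negP => l2a.
  have := count_lt_mono s l2a; rewrite cl2 -/c.
  by rewrite -ltnS prednK // leqNgt ltck1.
exists l2; split; first by apply: nas => //; rewrite gt_eqF.
by rewrite al2 cl2 add1n prednK.
Qed.

Lemma conv_inj n (Q : 'rV[R]_n -> R) (hQ : forall c a, Q (c *: a) = c ^+ 2 * Q a)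
  (a b : 'rV[R]_n) : 0 < Q a -> 0 < Q b -> Q b *: a = Q a *: b -> a = b.
Proof.
move=> Qa Qb h.
have : Q (Q b *: a) = Q (Q a *: b) by rewrite h.
rewrite !hQ => e.
have eQ : Q a = Q b.
  have : Q b * Q a * (Q b - Q a) = Q b ^+ 2 * Q a - Q a ^+ 2 * Q b by ring.
  rewrite e subrr => /eqP; rewrite !mulf_eq0 (gt_eqF Qa) (gt_eqF Qb) /= => /eqP h2; lra.
by move: h; rewrite eQ => /scalerI; apply; rewrite gt_eqF.
Qed.

Lemma sg_mono (f : R -> R) (D : pred R) : {in D &, {mono f : x y / x < y}} ->
  {in D &, forall a b, Num.sg (f a - f b) = Num.sg (a - b)}.
Proof.
move=> mf a b aD bD.
have [ab|ba|->] := ltrgtP a b; last by rewrite !subrr.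
- by rewrite !ltr0_sg // subr_lt0 // mf.
- by rewrite !gtr0_sg // subr_gt0 // mf.
Qed.

Lemma sg_pmul (c x : R) : 0 < c -> Num.sg (c * x) = Num.sg x.
Proof. by move=> c0; rewrite sgrM gtr0_sg // mul1r. Qed.

End Vec.

Local Open Scope card_scope.


Section Cnt.
Variable T : choiceType.

Definition cnt (A : set T) : nat := #|` fset_set A|.

Lemma cnt_card (A : set T) : finite_set A -> A #= `I_(cnt A).
Proof. by move=> fA; rewrite -[X in X #= _](fset_setK fA); apply/card_eq_fsetP. Qed.

Lemma cnt_eqI (A : set T) m : A #= `I_m -> cnt A = m.
Proof. exact: card_fset_set. Qed.

Lemma cnt_le (A B : set T) : finite_set B -> A `<=` B -> (cnt A <= cnt B)%N.
Proof.
move=> fB AB; have fA := sub_finite_set AB fB.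
by apply: fsubset_leq_card; rewrite -fset_set_sub.
Qed.

Lemma cnt0 : cnt set0 = 0%N.
Proof. by rewrite /cnt fset_set0 cardfs0. Qed.

Lemma cnt1 (x : T) : cnt [set x] = 1%N.
Proof. by rewrite /cnt fset_set1 cardfs1. Qed.

Lemma cnt_U (A B : set T) : finite_set A -> finite_set B -> A `&` B = set0 ->
  cnt (A `|` B) = (cnt A + cnt B)%N.
Proof.
move=> fA fB AB; rewrite /cnt fset_setU // cardfsU -fset_setI // AB fset_set0.
by rewrite cardfs0 subn0.
Qed.

Lemma cnt_image (f : T -> T) (A : set T) : finite_set A ->
  {in A &, injective f} -> cnt (f @` A) = cnt A.
Proof.
move=> fA fi; apply: cnt_eqI; apply: card_eq_trans (inj_card_eq fi) _.
exact: cnt_card.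
Qed.

Lemma cnt_seq (s : seq T) (P : T -> Prop) : uniq s ->
  cnt [set t | t \in s /\ P t] = count (fun t => `[< P t >]) s.
Proof.
elim: s => [|a s IH] /=.
  move=> _; rewrite -cnt0; congr cnt; apply/seteqP; split => t //=.
  by case.
move=> /andP[aNs us].
have fs : finite_set [set t | t \in s /\ P t].
  by apply: (@sub_finite_set _ _ [set` s]); [move=> t [] | exact: finite_seq].
case: (pselect (P a)) => Pa.
  rewrite asboolT // add1n -IH //.
  have -> : [set t | t \in a :: s /\ P t] = [set a] `|` [set t | t \in s /\ P t].
    apply/seteqP; split => t /=.
      by rewrite inE => -[/orP[/eqP->|ts] Pt]; [left|right].
    by case=> [->|[ts Pt]]; rewrite inE ?eqxx ?ts ?orbT.
  rewrite cnt_U ?cnt1 //; try exact: finite_set1.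
  by apply/seteqP; split => t //= [-> [as' _]]; move: aNs; rewrite as'.
rewrite asboolF // add0n -IH //; congr cnt; apply/seteqP; split => t /=.
  by rewrite inE => -[/orP[/eqP->|ts] Pt] //.
by case=> ts Pt; rewrite inE ts orbT.
Qed.

Lemma seq_max (R : realType) (f : T -> R) (s : seq T) : s != [::] ->
  exists2 a, a \in s & forall b, b \in s -> f b <= f a.
Proof.
elim: s => [//|a s IH] _.
have [->|sn] := eqVneq s [::].
  by exists a; rewrite ?mem_head // => b; rewrite inE => /eqP->.
have [c cs Hc] := IH sn.
have [le|lt] := leP (f a) (f c).
  exists c; first by rewrite inE cs orbT.
  by move=> b; rewrite inE => /orP[/eqP->//|]; apply: Hc.
exists a; first exact: mem_head.
move=> b; rewrite inE => /orP[/eqP->//|/Hc h].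
by apply: le_trans h (ltW lt).
Qed.

Lemma fin_max (R : realType) (f : T -> R) (A : set T) : finite_set A -> A !=set0 ->
  exists2 a, A a & forall b, A b -> f b <= f a.
Proof.
move=> /finite_fsetP[X ->] [y Xy].
have : (X : seq T) != [::] by apply/eqP => e; move: Xy; rewrite /= -[y \in X]/(y \in (X : seq T)) e.
move=> /(seq_max f)[a aX Ha]; exists a => // b; exact: Ha.
Qed.

Lemma fin_min (R : realType) (f : T -> R) (A : set T) : finite_set A -> A !=set0 ->
  exists2 a, A a & forall b, A b -> f a <= f b.
Proof.
move=> fA nA; have [a Aa Ha] := fin_max (fun x => - f x) fA nA.
by exists a => // b /Ha; rewrite lerN2.
Qed.

Lemma fin_seq (A : set T) : finite_set A -> exists s : seq T, uniq s /\ A = [set t | t \in s].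
Proof.
move=> /finite_fsetP[X ->]; exists X; split; first exact: fset_uniq.
by [].
Qed.

End Cnt.


Lemma arith1 m n : (m < n)%N -> (m + (n - 1 - m) < n)%N /\ (n <= m + (1 + (n - 1 - m)))%N.
Proof. lia. Qed.
Lemma arith2 m n s : (n <= m + (1 + s))%N -> (n - 1 - m <= s)%N.
Proof. lia. Qed.

Section Generic.
Variables (R : realType) (T : choiceType) (dst : T -> T -> R).
Hypotheses (dsym : forall x y, dst x y = dst y x) (dxx : forall x, dst x x = 0)
  (dtri : forall x y z, dst x z <= dst x y + dst y z).

Lemma dge0 x y : 0 <= dst x y.
Proof. have := dtri x y x; rewrite dxx (dsym y x) => h; lra. Qed.

Lemma dlip x y s : dst y s <= dst x s + dst x y /\ dst x s <= dst y s + dst x y.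
Proof.
split; first by have := dtri y x s; rewrite (dsym y x); lra.
by have := dtri x y s; lra.
Qed.

Variables (G : set (T -> T)) (x0 : T).
Hypotheses (hG : isometry_group dst G) (hdisc : discontinuous_group dst G)
  (hstab : trivial_stabilizer G x0).
Variable n : nat.
Hypotheses (hn : (1 <= n)%N) (hnS : `I_n #<= gorbit G x0).

Local Notation S := (gorbit G x0).

Lemma G_id : G id. Proof. by case: hG. Qed.
Lemma G_comp g h : G g -> G h -> G (g \o h). Proof. by case: hG => _ H _ _; apply: H. Qed.
Lemma G_inv g : G g -> exists2 h, G h & (forall x, h (g x) = x) /\ (forall x, g (h x) = x).
Proof.
case: hG => _ _ H _ /H[h Gh [e1 e2]]; exists h => //; split => x.
  by have := congr1 (fun F => F x) e1.
by have := congr1 (fun F => F x) e2.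
Qed.
Lemma G_iso g : G g -> forall x y, dst (g x) (g y) = dst x y.
Proof. by case: hG => _ _ _ H /H[]. Qed.
Lemma G_inj g : G g -> injective g.
Proof. by move=> /G_inv[h _ [e1 _]] x y e; rewrite -(e1 x) e e1. Qed.

Lemma S_x0 : S x0. Proof. by exists id => //; exact: G_id. Qed.
Lemma S_g g s : G g -> S s -> S (g s).
Proof. by move=> Gg [h Gh <-]; exists (g \o h) => //; apply: G_comp. Qed.

Lemma S_ball_fin x r : finite_set [set s | S s /\ dst x s <= r].
Proof.
pose r' := Num.max 1 (Num.max r (dst x x0)).
have r'0 : 0 < r' by rewrite lt_max ltr01.
have := hdisc x r'0 => fF.
apply: (sub_finite_set _ (finite_image (fun g => g x0) fF)).
move=> s [[g Gg <-] hs]; exists g => //; split => //; exists x0; split.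
  by rewrite le_max; apply/orP; right; rewrite le_max lexx orbT.
by rewrite le_max; apply/orP; right; rewrite le_max hs.
Qed.

Definition Lt x p := [set s | S s /\ dst x s < dst x p].
Definition Le x p := [set s | S s /\ dst x s <= dst x p].
Definition Tie x p := [set s | S s /\ dst x s = dst x p].

Lemma Le_fin x p : finite_set (Le x p). Proof. exact: S_ball_fin. Qed.
Lemma Lt_fin x p : finite_set (Lt x p).
Proof. by apply: sub_finite_set (Le_fin x p) => s [? /ltW]; split. Qed.
Lemma Tie_fin x p : finite_set (Tie x p).
Proof. by apply: sub_finite_set (Le_fin x p) => s [? h]; split => //; rewrite h. Qed.

Lemma Le_split x p : Le x p = Lt x p `|` Tie x p.
Proof.
apply/seteqP; split => s /=.
  by case=> Ss; rewrite le_eqVlt => /orP[/eqP h|h]; [right|left]; split.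
by case=> -[Ss h]; split => //; lra.
Qed.

Lemma LtTie0 x p : Lt x p `&` Tie x p = set0.
Proof. by apply/seteqP; split => s //= [[_ h] [_ e]]; move: h; rewrite e ltxx. Qed.

Lemma cnt_Le x p : cnt (Le x p) = (cnt (Lt x p) + cnt (Tie x p))%N.
Proof. by rewrite Le_split cnt_U //; [exact: Lt_fin | exact: Tie_fin | exact: LtTie0]. Qed.

Definition rk x p := (cnt (Lt x p) < n)%N && (n <= cnt (Le x p))%N.

Local Notation B := (brillouin dst S n x0).

Lemma B_rk x : B x <-> rk x x0.
Proof.
have e1 : oball dst x (dst x x0) `&` S = Lt x x0.
  by apply/seteqP; split => s /= [].
have e2 : sphere_at dst x (dst x x0) `&` S = Tie x x0.
  by apply/seteqP; split => s /= [].
split.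
  case=> m [l [l1 [hm [hl [h1 h2]]]]]; move: hm hl; rewrite e1 e2.
  move=> /cnt_eqI hm /cnt_eqI hl; apply/andP; split.
    by rewrite hm; lia.
  by rewrite cnt_Le hm hl.
move=> /andP[h1 h2]; exists (cnt (Lt x x0)), (cnt (Tie x x0)).
split.
  have : (cnt [set x0] <= cnt (Tie x x0))%N.
    by apply: cnt_le; [exact: Tie_fin | move=> s ->; split => //; exact: S_x0].
  by rewrite cnt1.
rewrite e1 e2; split; first exact: cnt_card (Lt_fin x x0).
split; first exact: cnt_card (Tie_fin x x0).
by split; [lia | rewrite -cnt_Le].
Qed.

Lemma iso_img g x (c : R -> Prop) : G g ->
  [set s | S s /\ c (dst (g x) s)] = g @` [set s | S s /\ c (dst x s)].
Proof.
move=> Gg; have [h Gh [e1 e2]] := G_inv Gg.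
apply/seteqP; split => s /=.
  case=> Ss hc; exists (h s); last exact: e2.
  by split; [exact: S_g | rewrite -(G_iso Gg) e2].
by case=> t [St hc] <-; split; [exact: S_g | rewrite G_iso].
Qed.

Lemma rk_iso g x p : G g -> rk x p -> rk (g x) (g p).
Proof.
move=> Gg; rewrite /rk /Lt /Le (G_iso Gg x p).
rewrite (iso_img x (fun r => r < dst x p) Gg) (iso_img x (fun r => r <= dst x p) Gg).
rewrite !cnt_image //; try exact: Lt_fin; try exact: Le_fin;
  by move=> a b _ _; apply: G_inj.
Qed.

Lemma rk_unique y p q : rk y p -> rk y q -> dst y p = dst y q.
Proof.
move=> /andP[p1 p2] /andP[q1 q2].
have [lt|lt|//] := ltrgtP (dst y p) (dst y q).
  have : (cnt (Le y p) <= cnt (Lt y q))%N.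
    by apply: cnt_le; [exact: Lt_fin | move=> s [Ss h]; split => //; apply: le_lt_trans lt].
  lia.
have : (cnt (Le y q) <= cnt (Lt y p))%N.
  by apply: cnt_le; [exact: Lt_fin | move=> s [Ss h]; split => //; apply: le_lt_trans lt].
lia.
Qed.


Lemma exists_rank x : exists2 p, S p & rk x p.
Proof.
have [C CI CS] := card_subP _ _ hnS.
have fC : finite_set C by apply/finite_setP; exists n.
have cC : cnt C = n by apply: cnt_eqI.
have nC : C !=set0.
  apply/set0P/negP => /eqP C0; move: cC; rewrite C0 cnt0; lia.
have [p1 Cp1 Hp1] := fin_max (dst x) fC nC.
pose Cand := [set p | (S p /\ dst x p <= dst x p1) /\ (n <= cnt (Le x p))%N].
have fCand : finite_set Cand.
  by apply: sub_finite_set (S_ball_fin x (dst x p1)) => p [].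
have Cp1' : Cand p1.
  split; first by split; [exact: CS|].
  rewrite -cC; apply: cnt_le; first exact: Le_fin.
  by move=> s Cs; split; [exact: CS | exact: Hp1].
have [p [[Sp hpp1] hp] Hmin] := fin_min (dst x) fCand (ex_intro _ p1 Cp1').
exists p => //; apply/andP; split => //.
have [->|ne] := eqVneq (Lt x p) set0; first by rewrite cnt0.
have nLt : Lt x p !=set0 by apply/set0P.
have [q [Sq qp] Hq] := fin_max (dst x) (Lt_fin x p) nLt.
have eLe : Le x q = Lt x p.
  apply/seteqP; split => s /=.
    by case=> Ss h; split => //; apply: le_lt_trans h qp.
  by case=> Ss h; split => //; apply: Hq.
rewrite ltnNge; apply/negP => hn'.
have Cq : Cand q.
  split; first by split => //; apply: ltW; exact: lt_le_trans qp hpp1.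
  by rewrite eLe.
by have := Hmin q Cq; rewrite leNgt qp.
Qed.

Lemma local_sep x : exists2 eta, 0 < eta & forall y, dst x y < eta ->
  forall s, S s ->
    (dst x s < dst x x0 -> dst y s < dst y x0) /\
    (dst x x0 < dst x s -> dst y x0 < dst y s).
Proof.
have [sF [uF eF]] := fin_seq (S_ball_fin x (dst x x0 + 2)).
pose L := [seq dst x s | s <- sF & dst x s != dst x x0].
have rL : dst x x0 \notin L.
  apply/mapP => -[s]; rewrite mem_filter => /andP[/eqP h _] e; exact: h (esym e).
have [del d0 Hd] := gap_exists rL.
have key : forall s, S s -> dst x s != dst x x0 -> dst x s <= dst x x0 + 2 ->
    del < `|dst x s - dst x x0|.
  move=> s Ss sr sb; apply: Hd; apply/mapP; exists s => //.
  rewrite mem_filter sr /=.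
  have : [set s | S s /\ dst x s <= dst x x0 + 2] s by split.
  by rewrite eF.
exists (Num.min (del / 2) 1); first by rewrite lt_min ltr01 divr_gt0.
move=> y; rewrite lt_min => /andP[hy1 hy2] s Ss.
have [l1 l2] := dlip x y s.
have [m1 m2] := dlip x y x0.
have dxy := dge0 x y.
split => h.
  have sr : dst x s != dst x x0 by rewrite lt_eqF.
  have sb : dst x s <= dst x x0 + 2 by lra.
  have := key s Ss sr sb; rewrite ltr0_norm ?subr_lt0 // => hk.
  lra.
have sr : dst x s != dst x x0 by rewrite gt_eqF.
have [sb|sb] := leP (dst x s) (dst x x0 + 2).
  have := key s Ss sr sb; rewrite gtr0_norm ?subr_gt0 // => hk.
  lra.
lra.
Qed.

Lemma local_decomp x : exists2 eta, 0 < eta & forall y, dst x y < eta ->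
  Lt y x0 = Lt x x0 `|` [set t | Tie x x0 t /\ dst y t < dst y x0] /\
  Le y x0 = Lt x x0 `|` [set t | Tie x x0 t /\ dst y t <= dst y x0].
Proof.
have [eta e0 He] := local_sep x.
exists eta => // y hy; have Hs := He y hy.
split; apply/seteqP; split => s /=.
- case=> Ss h; have [lt|gt|eq] := ltrgtP (dst x s) (dst x x0).
  + by left.
  + by have := (Hs s Ss).2 gt; lra.
  + by right.
- by case=> [[Ss h]|[[Ss e] h]]; split => //; exact: (Hs s Ss).1 h.
- case=> Ss h; have [lt|gt|eq] := ltrgtP (dst x s) (dst x x0).
  + by left.
  + by have := (Hs s Ss).2 gt; lra.
  + by right.
- by case=> [[Ss h]|[[Ss e] h]]; split => //; apply: ltW; exact: (Hs s Ss).1 h.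
Qed.

Lemma Tie_x0 x : Tie x x0 x0. Proof. by split => //; exact: S_x0. Qed.

Lemma int_single x : rk x x0 -> (forall t, Tie x x0 t -> t = x0) ->
  minterior dst B x.
Proof.
move=> hx ht; have [eta e0 He] := local_decomp x.
exists eta => // y /= hy; apply/B_rk; have [e1 e2] := He y hy.
have E1 : [set t | Tie x x0 t /\ dst y t < dst y x0] = set0.
  by apply/seteqP; split => t //= [/ht -> ]; rewrite ltxx.
have E2 : [set t | Tie x x0 t /\ dst y t <= dst y x0] = Tie x x0.
  apply/seteqP; split => t /=; first by case.
  by move=> h; split => //; rewrite (ht t h).
by rewrite /rk e1 e2 E1 E2 setU0 -Le_split.
Qed.

Lemma B_closed : mclosed dst B.
Proof.
move=> x hx; apply/B_rk; have [eta e0 He] := local_decomp x.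
have [y /B_rk /andP[h1 h2] hy] := hx eta e0.
have [e1 e2] := He y hy.
apply/andP; split.
  apply: leq_ltn_trans h1; apply: cnt_le; first exact: Lt_fin.
  by rewrite e1 => s hs; left.
apply: leq_trans h2 _; apply: cnt_le; first exact: Le_fin.
rewrite e2 => s [[Ss h]|[[Ss h] _]]; split => //; first exact: ltW.
by rewrite h.
Qed.

Lemma bd_tie x : mboundary dst B x -> exists t, S t /\ t <> x0 /\ dst x t = dst x x0.
Proof.
case=> hc hi; have hB : B x := B_closed hc.
apply: contrapT => hn'; apply: hi; apply: int_single; first exact/B_rk.
move=> t [St e]; apply: contrapT => tx; apply: hn'; by exists t.
Qed.

Lemma int_sub (A : set T) : minterior dst A `<=` A.
Proof. by move=> x [e e0 H]; apply: H; rewrite /oball /= dxx. Qed.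

Lemma int_idem (A : set T) : minterior dst (minterior dst A) = minterior dst A.
Proof.
apply/seteqP; split; first exact: int_sub.
move=> x [e e0 H]; exists (e / 2); first by rewrite divr_gt0.
move=> y hy; exists (e / 2); first by rewrite divr_gt0.
move=> z hz; apply: H; rewrite /oball /= in hy hz *.
have := dtri x y z; lra.
Qed.

Lemma cover x : exists2 g, G g & (g @` B) x.
Proof.
have [p [g Gg gp] hr] := exists_rank x.
have [h Gh [e1 e2]] := G_inv Gg.
exists g => //; exists (h x); last exact: e2.
apply/B_rk; have := rk_iso Gh hr; by rewrite -gp e1.
Qed.

Definition HH := [set H | exists t, S t /\ t <> x0 /\ H = [set y | dst y t = dst y x0]].

Lemma HH_lf : locally_finite dst HH.
Proof.
move=> x; exists 1 => //.
apply: (sub_finite_set _ (finite_image (fun t => [set y | dst y t = dst y x0])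
  (S_ball_fin x (dst x x0 + 2)))).
move=> H [[t [St [tx ->]]] [y /= hy hxy]]; exists t => //; split => //.
have := dtri x y t; have := dtri y x x0; rewrite (dsym y x); have := dge0 x y; lra.
Qed.

Lemma HH_cover : mboundary dst B `<=` \bigcup_(H in HH) H.
Proof.
move=> x /bd_tie[t [St [tx e]]].
exists [set y | dst y t = dst y x0] => //; by exists t.
Qed.

Variables (N : nat) (del : T -> 'rV[R]_N).
Hypothesis del_inj : injective del.
Hypothesis pert : forall x (v : 'rV[R]_N) e, 0 < e -> exists y, dst x y < e /\
  forall t p, dst x t = dst x p -> Num.sg (dst y t - dst y p) = Num.sg (dotv v (del p - del t)).
Hypothesis conv : forall x p, exists v0,
  (forall t, dst x t = dst x p -> t <> p -> 0 < dotv v0 (del p - del t)) /\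
  (forall t s, dst x t = dst x p -> dst x s = dst x p -> t <> p -> s <> p -> t <> s ->
     dotv v0 (del p - del s) *: (del p - del t) != dotv v0 (del p - del t) *: (del p - del s)).

Lemma sg_eq_lt0 (a b : R) : Num.sg a = Num.sg b -> (a < 0) = (b < 0).
Proof. by move=> h; rewrite -sgr_lt0 h sgr_lt0. Qed.

Lemma sg_eq_eq0 (a b : R) : Num.sg a = Num.sg b -> (a == 0) = (b == 0).
Proof. by move=> h; rewrite -sgr_eq0 h sgr_eq0. Qed.

Lemma disj g h : G g -> G h -> g <> h ->
  g @` minterior dst B `&` h @` minterior dst B = set0.
Proof.
move=> Gg Gh gh; apply/seteqP; split => // z [[a [e1 e10 H1] ga] [b [e2 e20 H2] hb]].
have [g' Gg' [g1 g2]] := G_inv Gg.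
have [h' Gh' [h1 h2]] := G_inv Gh.
have pq : g x0 <> h x0.
  move=> e; apply: gh.
  have : h' \o g = id.
    apply: hstab; first exact: G_comp.
    by rewrite /= e h1.
  move=> e'; apply: funext => x.
  by rewrite -(h2 (g x)); have := congr1 (fun F => F x) e'; rewrite /= => ->.
have near : forall y, dst z y < Num.min e1 e2 -> rk y (g x0) /\ rk y (h x0).
  move=> y; rewrite lt_min => /andP[y1 y2]; split.
    have : B (g' y) by apply: H1; rewrite /oball /= -(G_iso Gg) g2 ga.
    by move=> /B_rk /(rk_iso Gg); rewrite g2.
  have : B (h' y) by apply: H2; rewrite /oball /= -(G_iso Gh) h2 hb.
  by move=> /B_rk /(rk_iso Gh); rewrite h2.
have m0 : 0 < Num.min e1 e2 by rewrite lt_min e10 e20.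
have tz : dst z (g x0) = dst z (h x0).
  have hz : dst z z < Num.min e1 e2 by rewrite dxx.
  by have [r1 r2] := near z hz; apply: rk_unique.
have [y [hy Hy]] := pert z (del (h x0) - del (g x0)) m0.
have := Hy _ _ tz; have [r1 r2] := near y hy; rewrite (rk_unique r1 r2) subrr sgr0.
move=> /esym/eqP; rewrite sgr_eq0 => /eqP /dotvv_eq0 /eqP; rewrite subr_eq0 => /eqP.
by move=> /del_inj /esym.
Qed.

Lemma regular : B `<=` mclosure dst (minterior dst B).
Proof.
move=> x /B_rk hx e e0.
have [eta eta0 He] := local_decomp x.
pose C' := [set t | Tie x x0 t /\ t <> x0].
have fC' : finite_set C' by apply: sub_finite_set (Tie_fin x x0) => t [].
have [sC [usC eC]] := fin_seq fC'.
have memC : forall t, t \in sC <-> Tie x x0 t /\ t <> x0.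
  move=> t; split => ht.
    by have : [set t | t \in sC] t by []; rewrite -eC.
  by have : C' t by []; rewrite eC.
have x0C : x0 \notin sC by apply/negP => /memC[].
have fsC : forall P : T -> Prop, finite_set [set t | t \in sC /\ P t].
  by move=> P; apply: (@sub_finite_set _ _ [set` sC]); [move=> t [] | exact: finite_seq].
have hTie : Tie x x0 = [set x0] `|` [set t | t \in sC /\ True].
  apply/seteqP; split => t /=.
    move=> ht; have [->|tx] := eqVneq t x0; [by left | right; split => //].
    by apply/memC; split => //; apply/eqP.
  by case=> [->|[/memC[]//]]; exact: Tie_x0.
have cTie : cnt (Tie x x0) = (1 + size sC)%N.
  rewrite hTie cnt_U; [|exact: finite_set1|exact: fsC|].
    rewrite cnt1 cnt_seq // -(count_predT sC); congr (_ + _)%N.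
    by apply: eq_count => t; rewrite asboolT.
  by apply/seteqP; split => t //= [-> [h _]]; move: x0C; rewrite h.
pose m := cnt (Lt x x0).
move: (hx) => /andP[hm hM]; rewrite cnt_Le cTie -/m in hM.
pose k := (n - 1 - m)%N.
have hk : (k <= size sC)%N by apply: arith2.
have [v0 [hv0 hinj]] := conv x x0.
pose f t (w : 'rV[R]_N) := dotv w (del x0 - del t).
have fpos : forall t, t \in sC -> 0 < f t v0.
  by move=> t /memC[[St ht] tx]; apply: hv0.
pose F t s := f s v0 *: (del x0 - del t) - f t v0 *: (del x0 - del s).
pose cs := [seq c <- [seq F t s | t <- sC, s <- sC] | c != 0].
have [w hw] : exists w, forall c, c \in cs -> dotv w c != 0.
  by apply: avoid_hyp => c; rewrite mem_filter => /andP[].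
pose rho t := f t w / f t v0.
have rho_inj : {in sC &, injective rho}.
  move=> t s ht hs e'; apply: contrapT => ts.
  have [[St et] tx] := (memC t).1 ht.
  have [[Ss es] sx] := (memC s).1 hs.
  have Fn0 : F t s != 0 by rewrite subr_eq0; apply: hinj.
  have : F t s \in cs by rewrite mem_filter Fn0 /=; apply: allpairs_f.
  move/hw; rewrite /F dotvBr !dotvZr -/(f t w) -/(f s w).
  have ft := fpos t ht; have fs := fpos s hs.
  move: e'; rewrite /rho => e'.
  have -> : f s v0 * f t w - f t v0 * f s w = f t v0 * f s v0 * (f t w / f t v0 - f s w / f s v0).
    by field; rewrite !gt_eqF.
  by rewrite e' subrr mulr0 eqxx.
have urho : uniq (map rho sC) by rewrite map_inj_in_uniq.
have hk' : (k <= size (map rho sC))%N by rewrite size_map.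
have [lam [lamN clam]] := rank_select urho hk'.
have rl : forall t, t \in sC -> rho t != lam.
  by move=> t ht; apply/eqP => e'; move: lamN; rewrite -e' map_f.
pose v := w - lam *: v0.
have fv : forall t, t \in sC -> Num.sg (f t v) = Num.sg (rho t - lam).
  move=> t ht; have ft := fpos t ht; rewrite -[RHS](sg_pmul _ ft); congr Num.sg.
  rewrite /f /v dotvBl dotvZl -/(f t w) -/(f t v0) /rho.
  by field; rewrite gt_eqF.
have me : 0 < Num.min e eta by rewrite lt_min e0 eta0.
have [y [hy Hy]] := pert x v me.
move: hy; rewrite lt_min => /andP[hye hyeta].
have [e1 e2] := He y hyeta.
have sgt : forall t, t \in sC -> Num.sg (dst y t - dst y x0) = Num.sg (rho t - lam).
  move=> t ht; have [[St et] tx] := (memC t).1 ht.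
  by rewrite Hy // -fv.
pose K := [set t | t \in sC /\ rho t < lam].
have eK1 : [set t | Tie x x0 t /\ dst y t < dst y x0] = K.
  apply/seteqP; split => t /=.
    case=> ht hlt; have tx : t <> x0 by move=> e'; move: hlt; rewrite e' ltxx.
    have tC : t \in sC by apply/memC.
    split => //; rewrite -subr_lt0 -(sg_eq_lt0 (sgt t tC)) subr_lt0 //.
  case=> tC hr; have [ht tx] := (memC t).1 tC; split => //.
  by rewrite -subr_lt0 (sg_eq_lt0 (sgt t tC)) subr_lt0.
have eK2 : [set t | Tie x x0 t /\ dst y t <= dst y x0] = [set x0] `|` K.
  apply/seteqP; split => t /=.
    case=> ht hle; have [->|tx] := eqVneq t x0; first by left.
    have tC : t \in sC by apply/memC; split => //; apply/eqP.
    right; split => //.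
    have hne : dst y t - dst y x0 != 0.
      by rewrite (sg_eq_eq0 (sgt t tC)) subr_eq0 rl.
    rewrite -subr_lt0 -(sg_eq_lt0 (sgt t tC)); rewrite lt_neqAle hne /=; lra.
  case=> [->|[tC hr]]; first by split; [exact: Tie_x0 | rewrite lexx].
  have [ht tx] := (memC t).1 tC; split => //.
  by apply: ltW; rewrite -subr_lt0 (sg_eq_lt0 (sgt t tC)) subr_lt0.
have cK : cnt K = k.
  by rewrite cnt_seq // -clam count_map; apply: eq_count => t; rewrite /= asboolb.
have dK : Lt x x0 `&` K = set0.
  apply/seteqP; split => t //= [[_ h] [/memC[[_ e'] _] _]]; move: h; rewrite e' ltxx.
  done.
have fK : finite_set K := fsC _.
have fLt := Lt_fin x x0.
have cLt : cnt (Lt y x0) = (m + k)%N by rewrite e1 eK1 cnt_U // cK.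
have f1 : finite_set [set x0] := finite_set1 x0.
have d1 : [set x0] `&` K = set0.
  by apply/seteqP; split => t //= [-> [h _]]; move: x0C; rewrite h.
have f1K : finite_set ([set x0] `|` K) by rewrite finite_setU.
have d2 : Lt x x0 `&` ([set x0] `|` K) = set0.
  apply/seteqP; split => t //= [[_ h] [e'|[tC _]]].
    by move: h; rewrite e' ltxx.
  by have [[_ e'] _] := (memC t).1 tC; move: h; rewrite e' ltxx.
have cLe : cnt (Le y x0) = (m + (1 + k))%N.
  by rewrite e2 eK2 cnt_U // cnt_U // cnt1 cK.
have ry : rk y x0.
  by rewrite /rk cLt cLe; have [a1 a2] := arith1 hm; apply/andP; split.
exists y; last by [].
apply: int_single => // t [St ht].
have : Le y x0 t by split => //; rewrite ht.
rewrite e2 eK2 => -[lt|[//|kt]].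
  have : Lt y x0 t by rewrite e1; left.
  by case=> _; rewrite ht ltxx.
have : Lt y x0 t by rewrite e1 eK1; right.
by case=> _; rewrite ht ltxx.
Qed.

Variable hyp : set T -> Prop.
Hypothesis hyp_bis : forall p t, p <> t -> hyp [set y | dst y t = dst y p].

Theorem generic_main : let B := brillouin dst S n x0 in
  [/\ fundamental_domain dst G B,
      (exists2 HH0 : set (set T), (forall H, HH0 H -> hyp H) /\ locally_finite dst HH0
       & mboundary dst B `<=` \bigcup_(H in HH0) H)
    & mboundary dst B = mboundary dst (minterior dst B)].
Proof.
move=> B'; split.
- split; first exact: B_closed.
    exact: cover.
  exact: disj.
- exists HH; last exact: HH_cover.
  split; last exact: HH_lf.
  by move=> H [t [St [tx ->]]]; apply: hyp_bis => e; apply: tx.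
- rewrite /mboundary int_idem; congr (_ `\` _).
  apply/seteqP; split => x hx.
    by apply: regular; apply: B_closed.
  by move=> e e0; have [y hy hxy] := hx e e0; exists y => //; exact: (int_sub hy).
Qed.

End Generic.

HB.instance Definition _ (R : realType) k d := gen_eqMixin (mpoint R k d).
HB.instance Definition _ (R : realType) k d := gen_choiceMixin (mpoint R k d).

Section Common.
Variable R : realType.

Lemma sval_inj k d : injective (fun x : mpoint R k d => proj1_sig x).
Proof.
move=> [a pa] [b pb] /= e; subst b; congr exist; exact: Prop_irrelevance.
Qed.

Lemma N2D n (u v : 'rV[R]_n) c :
  dotv (u + c *: v) (u + c *: v) = dotv u u + 2 * c * dotv u v + c ^+ 2 * dotv v v.
Proof. by rewrite dotvDl !dotvDr !dotvZl !dotvZr (dotvC v u); ring. Qed.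

Lemma N2Z n (u : 'rV[R]_n) c : dotv (c *: u) (c *: u) = c ^+ 2 * dotv u u.
Proof. by rewrite dotvZl dotvZr; ring. Qed.

Lemma N2N n (u : 'rV[R]_n) : dotv (- u) (- u) = dotv u u.
Proof. by rewrite dotvNl dotvNr opprK. Qed.

Lemma sqrt_sg (A B : R) : 0 <= A -> 0 <= B ->
  Num.sg (Num.sqrt A - Num.sqrt B) = Num.sg (A - B).
Proof.
move=> A0 B0.
have mono : {in [pred x | 0 <= x] &, {mono (@Num.sqrt R) : x y / x < y}}.
  move=> x y; rewrite !inE => x0 y0; have [->|y0'] := eqVneq y 0.
    by rewrite sqrtr0 !ltNge sqrtr_ge0 x0.
  by rewrite ltr_sqrt // lt_neqAle eq_sym y0' y0.
by rewrite (sg_mono mono) // inE.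
Qed.

Lemma conv_of (T : Type) N (del : T -> 'rV[R]_N) (dinj : injective del)
  (tie : T -> Prop) (p : T) (v0 : 'rV[R]_N) (Q : 'rV[R]_N -> R)
  (hQ : forall c a, Q (c *: a) = c ^+ 2 * Q a) :
  (forall t, tie t -> t <> p -> 0 < Q (del p - del t)) ->
  (forall t, tie t -> dotv v0 (del p - del t) = Q (del p - del t) / 2) ->
  (forall t, tie t -> t <> p -> 0 < dotv v0 (del p - del t)) /\
  (forall t s, tie t -> tie s -> t <> p -> s <> p -> t <> s ->
     dotv v0 (del p - del s) *: (del p - del t) != dotv v0 (del p - del t) *: (del p - del s)).
Proof.
move=> Qpos hv; split.
  by move=> t ht tp; rewrite hv // divr_gt0 // Qpos.
move=> t s ht hs tp sp ts; rewrite !hv //; apply/eqP => e.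
have e2 : Q (del p - del s) *: (del p - del t) = Q (del p - del t) *: (del p - del s).
  have := congr1 (fun z => 2 *: z) e; rewrite !scalerA !mulrA !(mulrC 2) -!mulrA.
  by rewrite divff ?pnatr_eq0 // !mulr1.
have := conv_inj hQ (Qpos t ht tp) (Qpos s hs sp) e2.
by move=> /addrI /oppr_inj /dinj.
Qed.

Lemma tri_vec n (a b : 'rV[R]_n) :
  Num.sqrt (dotv (a + b) (a + b)) <= Num.sqrt (dotv a a) + Num.sqrt (dotv b b).
Proof.
rewrite -(ger0_norm (addr_ge0 (sqrtr_ge0 (dotv a a)) (sqrtr_ge0 (dotv b b)))).
rewrite -sqrtr_sqr ler_sqrt ?sqr_ge0 // sqrrD !sqr_sqrtr ?dotvv_ge0 //.
rewrite dotvDl !dotvDr (dotvC b a).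
have := cs_abs a b; have := ler_norm (dotv a b); lra.
Qed.

Lemma half_lem n (a b : 'rV[R]_n) : dotv b b = dotv a a ->
  dotv (- a) (b - a) = dotv (b - a) (b - a) / 2.
Proof. by move=> h; rewrite dotvNl !dotvBr !dotvBl (dotvC b a) h; field. Qed.

End Common.

Section Euclid.
Variables (R : realType) (d : nat).
Local Notation T := (mpoint R Euclid d).
Local Notation dst := (@geo_dist R Euclid d).

Lemma eu_dist (x y : T) :
  dst x y = Num.sqrt (dotv (sval x - sval y) (sval x - sval y)).
Proof. by []. Qed.

Lemma eu_sym (x y : T) : dst x y = dst y x.
Proof. by rewrite !eu_dist -opprB N2N. Qed.

Lemma eu_xx (x : T) : dst x x = 0.
Proof. by rewrite eu_dist subrr dotv0l sqrtr0. Qed.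

Lemma eu_tri (x y z : T) : dst x z <= dst x y + dst y z.
Proof.
rewrite !eu_dist.
have -> : sval x - sval z = (sval x - sval y) + (sval y - sval z).
  by rewrite addrA subrK.
exact: tri_vec.
Qed.

Lemma eu_tie (x t p : T) : dst x t = dst x p ->
  dotv (sval x - sval t) (sval x - sval t) = dotv (sval x - sval p) (sval x - sval p).
Proof. by rewrite !eu_dist => /eqP; rewrite eqr_sqrt ?dotvv_ge0 // => /eqP. Qed.

Lemma eu_pert (x : T) (v : 'rV[R]_d) e : 0 < e -> exists y : T, dst x y < e /\
  forall t p : T, dst x t = dst x p ->
    Num.sg (dst y t - dst y p) = Num.sg (dotv v (sval p - sval t)).
Proof.
move=> e0; pose c := Num.sqrt (dotv v v).
have c0 : 0 <= c := sqrtr_ge0 _.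
pose eps := e / (2 * (c + 1)).
have eps0 : 0 < eps by rewrite divr_gt0 // mulr_gt0 // ltr_pwDr.
exists (exist _ (sval x + eps *: v) I : T); split.
  rewrite eu_dist /= opprD addrA subrr add0r N2N N2Z sqrtrM ?sqr_ge0 //.
  rewrite sqrtr_sqr ger0_norm ?ltW // -/c.
  have : eps * c <= eps * (c + 1) by rewrite ler_pM2l // lerDl.
  have -> : eps * (c + 1) = e / 2 by rewrite /eps; field; rewrite gt_eqF // ltr_pwDr.
  lra.
move=> t p ht; have ht2 := eu_tie ht.
rewrite !eu_dist /= sqrt_sg ?dotvv_ge0 //.
have E : forall q, sval x + eps *: v - q = (sval x - q) + eps *: v by move=> q; rewrite addrAC.
rewrite !E !N2D ht2.
have -> : dotv (sval x - sval p) (sval x - sval p) + 2 * eps * dotv (sval x - sval t) v +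
   eps ^+ 2 * dotv v v - (dotv (sval x - sval p) (sval x - sval p) +
   2 * eps * dotv (sval x - sval p) v + eps ^+ 2 * dotv v v) =
   (2 * eps) * dotv v (sval p - sval t).
  rewrite !dotvBl !dotvBr (dotvC (sval x) v) (dotvC (sval t) v) (dotvC (sval p) v); ring.
by rewrite sg_pmul // mulr_gt0.
Qed.

Lemma eu_conv (x p : T) : exists v0 : 'rV[R]_d,
  (forall t, dst x t = dst x p -> t <> p -> 0 < dotv v0 (sval p - sval t)) /\
  (forall t s, dst x t = dst x p -> dst x s = dst x p -> t <> p -> s <> p -> t <> s ->
     dotv v0 (sval p - sval s) *: (sval p - sval t) != dotv v0 (sval p - sval t) *: (sval p - sval s)).
Proof.
exists (sval p - sval x).
apply: (@conv_of R T d (@proj1_sig _ _) (@sval_inj R Euclid d) (fun t => dst x t = dst x p) p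
  (sval p - sval x) (fun u => dotv u u) (fun c a => N2Z a c)).
  move=> t _ tp; apply: dotvv_gt0; rewrite subr_eq0; apply/eqP => e.
  by apply: tp; apply: sval_inj.
move=> t ht; have h := eu_tie ht.
have e1 : sval p - sval x = - (sval x - sval p) by rewrite opprB.
have e2 : sval p - sval t = (sval x - sval t) - (sval x - sval p).
  by rewrite opprB [RHS]addrC addrA subrK.
by rewrite e1 e2; apply: half_lem.
Qed.

Lemma eu_hyp (p t : T) : p <> t -> model_hyperplane [set y : T | dst y t = dst y p].
Proof.
move=> pt.
exists [set z : 'rV[R]_d | dotv (sval p - sval t) z =
  (dotv (sval p) (sval p) - dotv (sval t) (sval t)) / 2]; split.
  exists (sval p - sval t), ((dotv (sval p) (sval p) - dotv (sval t) (sval t)) / 2).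
  split => //; rewrite subr_eq0; apply/eqP => e; apply: pt; exact: sval_inj.
have E : forall y q : 'rV[R]_d, dotv (y - q) (y - q) = dotv y y - 2 * dotv q y + dotv q q.
  by move=> y q; rewrite !dotvBl !dotvBr (dotvC y q); ring.
apply/seteqP; split => y /=; rewrite ?eu_dist.
  move=> /eqP; rewrite eqr_sqrt ?dotvv_ge0 // !E dotvBl => /eqP h; lra.
rewrite dotvBl => h; congr Num.sqrt; rewrite !E; lra.
Qed.

End Euclid.

Section Acos.
Variable R : realType.

Lemma acos_in (a : R) : -1 <= a <= 1 -> acos a \in `[0, pi].
Proof. by move=> h; rewrite in_itv /= acos_ge0 // acos_lepi. Qed.

Lemma acos_mono (a b : R) : -1 <= a <= 1 -> -1 <= b <= 1 ->
  (acos a < acos b) = (b < a).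
Proof.
move=> ha hb; have := @ltr_cos R (acos a) (acos b) (acos_in ha) (acos_in hb).
rewrite !acosK ?in_itv //=.
Qed.

Lemma acos_sg (a b : R) : -1 <= a <= 1 -> -1 <= b <= 1 ->
  Num.sg (acos a - acos b) = Num.sg (b - a).
Proof.
move=> ha hb; have [ab|ab|->] := ltrgtP a b; last by rewrite !subrr.
- by rewrite !gtr0_sg // subr_gt0 // acos_mono.
- by rewrite !ltr0_sg // subr_lt0 // acos_mono.
Qed.

Lemma acos_inj (a b : R) : -1 <= a <= 1 -> -1 <= b <= 1 -> acos a = acos b -> a = b.
Proof. by move=> ha hb e; rewrite -(acosK ha) -(acosK hb) e. Qed.

End Acos.

Section Sphere.
Variables (R : realType) (d : nat).
Local Notation T := (mpoint R Sphere d).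
Local Notation dst := (@geo_dist R Sphere d).

Lemma sp_dist (x y : T) : dst x y = acos (dotv (sval x) (sval y)).
Proof. by []. Qed.

Lemma sp_unit (x : T) : dotv (sval x) (sval x) = 1.
Proof. exact: (proj2_sig x). Qed.

Lemma unit_bound n (a b : 'rV[R]_n) : dotv a a = 1 -> dotv b b = 1 -> -1 <= dotv a b <= 1.
Proof.
move=> ha hb; have := cauchy_schwarz a b; rewrite ha hb mulr1 => h.
apply/andP; split; nra.
Qed.

Lemma sp_bound (x y : T) : -1 <= dotv (sval x) (sval y) <= 1.
Proof. by apply: unit_bound; apply: sp_unit. Qed.

Lemma sp_sym (x y : T) : dst x y = dst y x.
Proof. by rewrite !sp_dist dotvC. Qed.

Lemma sp_xx (x : T) : dst x x = 0.
Proof. by rewrite sp_dist sp_unit acos1. Qed.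

Lemma proj_dot n (x y z : 'rV[R]_n) :
  dotv (x - dotv x y *: y) (z - dotv y z *: y) =
  dotv x z - 2 * (dotv x y * dotv y z) + dotv x y * dotv y z * dotv y y.
Proof. by rewrite !dotvBl !dotvBr !dotvZl !dotvZr; ring. Qed.

Lemma sph_ineq n (x y z : 'rV[R]_n) : dotv x x = 1 -> dotv y y = 1 -> dotv z z = 1 ->
  dotv x y * dotv y z - Num.sqrt (1 - dotv x y ^+ 2) * Num.sqrt (1 - dotv y z ^+ 2)
  <= dotv x z.
Proof.
move=> hx hy hz.
have ex : dotv (x - dotv x y *: y) (x - dotv x y *: y) = 1 - dotv x y ^+ 2.
  by rewrite !dotvBl !dotvBr !dotvZl !dotvZr hx hy (dotvC y x); ring.
have ez : dotv (z - dotv y z *: y) (z - dotv y z *: y) = 1 - dotv y z ^+ 2.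
  by rewrite !dotvBl !dotvBr !dotvZl !dotvZr hz hy (dotvC z y); ring.
have exz : dotv (x - dotv x y *: y) (z - dotv y z *: y) = dotv x z - dotv x y * dotv y z.
  by rewrite proj_dot hy; ring.
have := cs_abs (x - dotv x y *: y) (z - dotv y z *: y).
rewrite exz ex ez => h.
have := ler_norm (- (dotv x z - dotv x y * dotv y z)).
rewrite normrN; lra.
Qed.

Lemma sp_tri (x y z : T) : dst x z <= dst x y + dst y z.
Proof.
rewrite !sp_dist.
set X := dotv (sval x) (sval y); set Y := dotv (sval y) (sval z).
set Z := dotv (sval x) (sval z).
have hX : -1 <= X <= 1 := sp_bound x y.
have hY : -1 <= Y <= 1 := sp_bound y z.
have hZ : -1 <= Z <= 1 := sp_bound x z.
have a0 := acos_ge0 hX; have b0 := acos_ge0 hY.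
have [big|small] := leP pi (acos X + acos Y).
  by apply: le_trans big; apply: acos_lepi.
have hcos : cos (acos X + acos Y) <= Z.
  rewrite cosD !acosK ?in_itv //= !sin_acos //.
  exact: (sph_ineq (sp_unit x) (sp_unit y) (sp_unit z)).
have hW : -1 <= cos (acos X + acos Y) <= 1 by rewrite cos_geN1 cos_le1.
rewrite -[X in _ <= X](@cosK R); last by rewrite in_itv /= addr_ge0 // ltW.
by rewrite leNgt acos_mono // -leNgt.
Qed.

Lemma sp_tie (x t p : T) : dst x t = dst x p ->
  dotv (sval x) (sval t) = dotv (sval x) (sval p).
Proof. by rewrite !sp_dist; apply: acos_inj; apply: sp_bound. Qed.

Lemma sp_pert (x : T) (v : 'rV[R]_d.+1) e : 0 < e -> exists y : T, dst x y < e /\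
  forall t p : T, dst x t = dst x p ->
    Num.sg (dst y t - dst y p) = Num.sg (dotv v (sval p - sval t)).
Proof.
move=> e0; have hx := sp_unit x.
pose w := v - dotv v (sval x) *: sval x.
have wx : dotv (sval x) w = 0.
  by rewrite /w dotvBr dotvZr hx (dotvC (sval x) v) mulr1 subrr.
have key : forall t p : T, dst x t = dst x p ->
    dotv w (sval p - sval t) = dotv v (sval p - sval t).
  move=> t p ht; rewrite /w dotvBl dotvZl [dotv (sval x) _]dotvBr (sp_tie ht) subrr mulr0 subr0.
  done.
have [w0|wn0] := eqVneq w 0.
  exists x; split; first by rewrite sp_xx.
  by move=> t p ht; rewrite ht subrr -key // w0 dotv0l.
have ww := dotvv_gt0 wn0.
pose nw := Num.sqrt (dotv w w).
have nw0 : 0 < nw by rewrite sqrtr_gt0.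
pose u := nw^-1 *: w.
have uu : dotv u u = 1.
  by rewrite /u dotvZl dotvZr -(sqr_sqrtr (ltW ww)) -/nw; field; rewrite gt_eqF.
have xu : dotv (sval x) u = 0 by rewrite /u dotvZr wx mulr0.
have ux : dotv u (sval x) = 0 by rewrite dotvC.
have hwu : forall a, dotv u a = nw^-1 * dotv w a by move=> a; rewrite /u dotvZl.
clearbody u.
pose th := Num.min (e / 2) 1.
have th0 : 0 < th by rewrite /th lt_min ltr01 andbT divr_gt0.
have hthe2 : th <= e / 2 by rewrite /th ge_min lexx.
have hthe : th < e by lra.
have th1 : th <= 1 by rewrite /th ge_min lexx orbT.
have thpi : th < pi by apply: le_lt_trans th1 _; have := @pi_ge2 R; lra.
pose yv := cos th *: sval x + sin th *: u.
have yy : dotv yv yv = 1.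
  rewrite /yv !dotvDl !dotvDr !dotvZl !dotvZr hx uu xu ux.
  by rewrite !mulr1 !mulr0 !addr0 ?add0r -!expr2 cos2Dsin2.
exists (exist _ yv yy : T); split.
  rewrite sp_dist /= /yv dotvDr !dotvZr hx xu mulr1 mulr0 addr0 cosK //.
  by rewrite in_itv /= ltW // ltW.
move=> t p ht; rewrite !sp_dist /=.
rewrite acos_sg; try exact: (unit_bound yy (sp_unit _)).
rewrite -dotvBr /yv dotvDl !dotvZl dotvBr (sp_tie ht) subrr mulr0 add0r.
rewrite hwu key // mulrA sg_pmul //.
by rewrite mulr_gt0 ?invr_gt0 // sin_gt0_pi // th0 thpi.
Qed.

Lemma sp_conv (x p : T) : exists v0 : 'rV[R]_d.+1,
  (forall t, dst x t = dst x p -> t <> p -> 0 < dotv v0 (sval p - sval t)) /\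
  (forall t s, dst x t = dst x p -> dst x s = dst x p -> t <> p -> s <> p -> t <> s ->
     dotv v0 (sval p - sval s) *: (sval p - sval t) != dotv v0 (sval p - sval t) *: (sval p - sval s)).
Proof.
exists (sval p).
apply: (@conv_of R T d.+1 (@proj1_sig _ _) (@sval_inj R Sphere d) (fun t => dst x t = dst x p) p
  (sval p) (fun u => dotv u u) (fun c a => N2Z a c)).
  move=> t _ tp; apply: dotvv_gt0; rewrite subr_eq0; apply/eqP => e.
  by apply: tp; apply: sval_inj.
move=> t _; rewrite !dotvBl !dotvBr !sp_unit (dotvC (sval t) (sval p)); lra.
Qed.

Lemma sp_hyp (p t : T) : p <> t -> model_hyperplane [set y : T | dst y t = dst y p].
Proof.
move=> pt; exists [set z : 'rV[R]_d.+1 | dotv (sval p - sval t) z = 0]; split.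
  exists (sval p - sval t); split => //.
  rewrite subr_eq0; apply/eqP => e; apply: pt; exact: sval_inj.
apply/seteqP; split => y /=; rewrite ?sp_dist.
  move=> /acos_inj; rewrite dotvBl (dotvC (sval p)) (dotvC (sval t)) => h.
  by rewrite h ?subrr //; apply: sp_bound.
rewrite dotvBl (dotvC (sval p)) (dotvC (sval t)) => /eqP; rewrite subr_eq0 => /eqP ->.
done.
Qed.

End Sphere.

Section Lorentz.
Variables (R : realType) (d : nat).
Local Notation V := 'rV[R]_d.+1.
Local Notation L := (@lorentz R d).

Definition a0 (u : V) := u 0 ord0.

Lemma dotv_split (u v : V) : dotv u v = a0 u * a0 v + \sum_(i < d.+1 | i != ord0) u 0 i * v 0 i.
Proof. by rewrite /dotv (bigD1 ord0) //. Qed.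

Lemma LE (u v : V) : L u v = dotv u v - 2 * (a0 u * a0 v).
Proof. rewrite /lorentz dotv_split /a0; ring. Qed.

Lemma a0D (u v : V) : a0 (u + v) = a0 u + a0 v. Proof. by rewrite /a0 mxE. Qed.
Lemma a0Z c (u : V) : a0 (c *: u) = c * a0 u. Proof. by rewrite /a0 mxE. Qed.
Lemma a0N (u : V) : a0 (- u) = - a0 u. Proof. by rewrite /a0 mxE. Qed.
Lemma a0B (u v : V) : a0 (u - v) = a0 u - a0 v. Proof. by rewrite a0D a0N. Qed.

Lemma LC (u v : V) : L u v = L v u.
Proof. by rewrite !LE dotvC (mulrC (a0 u)). Qed.
Lemma LDl (u v w : V) : L (u + v) w = L u w + L v w.
Proof. by rewrite !LE dotvDl a0D; ring. Qed.
Lemma LDr (u v w : V) : L w (u + v) = L w u + L w v.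
Proof. by rewrite !LE dotvDr a0D; ring. Qed.
Lemma LZl c (u v : V) : L (c *: u) v = c * L u v.
Proof. by rewrite !LE dotvZl a0Z; ring. Qed.
Lemma LZr c (u v : V) : L v (c *: u) = c * L v u.
Proof. by rewrite !LE dotvZr a0Z; ring. Qed.
Lemma LBl (u v w : V) : L (u - v) w = L u w - L v w.
Proof. by rewrite !LE dotvBl a0B; ring. Qed.
Lemma LBr (u v w : V) : L w (u - v) = L w u - L w v.
Proof. by rewrite !LE dotvBr a0B; ring. Qed.
Lemma L0l (v : V) : L 0 v = 0.
Proof. by rewrite LE dotv0l /a0 mxE mul0r mulr0 subr0. Qed.

Definition Pr (u : V) : V := \row_i (if i == ord0 then 0 else u 0 i).

Lemma dotv_Pr (u v : V) : dotv (Pr u) (Pr v) = dotv u v - a0 u * a0 v.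
Proof.
rewrite dotv_split [dotv u v]dotv_split /a0 !mxE eqxx mul0r add0r.
rewrite addrAC subrr add0r; apply: eq_bigr => i /negbTE hi; rewrite !mxE hi //.
Qed.

Lemma LS (u v : V) : L u v = dotv (Pr u) (Pr v) - a0 u * a0 v.
Proof. by rewrite dotv_Pr LE; ring. Qed.

Lemma Pr_eq0 (u : V) : dotv (Pr u) (Pr u) = 0 -> a0 u = 0 -> u = 0.
Proof.
move=> /dotvv_eq0 h h0; apply/rowP => i; rewrite mxE.
have [->|hi] := eqVneq i ord0; first exact: h0.
by have := congr1 (fun z : V => z 0 i) h; rewrite !mxE (negbTE hi).
Qed.

Lemma L_pd (x w : V) : L x x = -1 -> L w x = 0 -> 0 <= L w w /\ (L w w = 0 -> w = 0).
Proof.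
move=> hx hw; move: hx hw; rewrite !LS.
set Sxx := dotv (Pr x) (Pr x); set Sww := dotv (Pr w) (Pr w); set Swx := dotv (Pr w) (Pr x).
move=> hx hw.
have cs := cauchy_schwarz (Pr w) (Pr x); rewrite -/Sxx -/Sww -/Swx in cs.
have Sx0 : 0 <= Sxx := dotvv_ge0 _.
have Sw0 : 0 <= Sww := dotvv_ge0 _.
have ex : Sxx = a0 x ^+ 2 - 1 by rewrite expr2; lra.
have ew : Swx = a0 w * a0 x by lra.
rewrite ex ew in cs.
have x0p : 1 <= a0 x ^+ 2 by lra.
have key : Sww <= a0 w ^+ 2 -> a0 w = 0 /\ Sww = 0.
  move=> hle.
  have h1 : a0 w ^+ 2 * a0 x ^+ 2 <= Sww * (a0 x ^+ 2 - 1) by rewrite -exprMn.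
  have h2 : Sww <= 0 by nra.
  have S0 : Sww = 0 by lra.
  rewrite S0 mul0r in h1.
  have : a0 w ^+ 2 * a0 x ^+ 2 = 0.
    by apply/eqP; rewrite eq_le h1 mulr_ge0 ?sqr_ge0.
  move/eqP; rewrite mulf_eq0 !expf_eq0 /= => /orP[/eqP//|/eqP hx0].
  by move: x0p; rewrite hx0 expr0n /= ler10.
have A : Sww - a0 w * a0 w < 0 -> False.
  move=> lt; have hle : Sww <= a0 w ^+ 2 by rewrite expr2; lra.
  by have [h1 h2] := key hle; move: lt; rewrite h1 h2 mul0r subrr ltxx.
split; first by rewrite leNgt; apply/negP => /A.
move=> h0; have hle : Sww <= a0 w ^+ 2 by rewrite expr2; lra.
by have [h1 h2] := key hle; apply: Pr_eq0.
Qed.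

End Lorentz.

Section Hacosh.
Variable R : realType.
Local Notation q t := (t + Num.sqrt (t ^+ 2 - 1)).

Lemma hq_ge1 (t : R) : 1 <= t -> 1 <= q t.
Proof. by move=> h; have := sqrtr_ge0 (t ^+ 2 - 1); lra. Qed.

Lemma hq_le (x y : R) : 1 <= x -> x <= y -> Num.sqrt (x ^+ 2 - 1) <= Num.sqrt (y ^+ 2 - 1).
Proof.
move=> x1 xy; apply: ler_wsqrtr; rewrite lerD2r.
by rewrite ler_sqr // ?nnegrE; lra.
Qed.

Lemma hacosh_mono : {in [pred t : R | 1 <= t] &, {mono @hacosh R : x y / x < y}}.
Proof.
move=> x y; rewrite !inE => x1 y1; rewrite /hacosh.
have qx := hq_ge1 x1; have qy := hq_ge1 y1.
rewrite ltr_ln ?posrE; try lra.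
have [xy|yx|->] := ltrgtP x y; last by rewrite ltxx.
  by have := hq_le x1 (ltW xy); lra.
by have := hq_le y1 (ltW yx); lra.
Qed.

Lemma hacosh1 : hacosh (1 : R) = 0.
Proof. by rewrite /hacosh expr1n subrr sqrtr0 addr0 ln1. Qed.

Lemma hacosh_ge0 (t : R) : 1 <= t -> 0 <= hacosh t.
Proof. by move=> h; rewrite /hacosh ln_ge0 // hq_ge1. Qed.

Lemma hacosh_le (x y : R) : 1 <= x -> 1 <= y -> (hacosh x <= hacosh y) = (x <= y).
Proof. by move=> x1 y1; rewrite !leNgt hacosh_mono. Qed.

Lemma hacosh_inj (x y : R) : 1 <= x -> 1 <= y -> hacosh x = hacosh y -> x = y.
Proof.
move=> x1 y1 e; apply/eqP; rewrite eq_le -(hacosh_le x1 y1) -(hacosh_le y1 x1) e lexx //.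
Qed.

Lemma hacosh_sg (x y : R) : 1 <= x -> 1 <= y ->
  Num.sg (hacosh x - hacosh y) = Num.sg (x - y).
Proof. by move=> x1 y1; rewrite (sg_mono hacosh_mono) // inE. Qed.

Lemma hacosh_add (X Y Z : R) : 1 <= X -> 1 <= Y -> 1 <= Z ->
  Z <= X * Y + Num.sqrt (X ^+ 2 - 1) * Num.sqrt (Y ^+ 2 - 1) ->
  hacosh Z <= hacosh X + hacosh Y.
Proof.
move=> X1 Y1 Z1 hZ.
set a := Num.sqrt (X ^+ 2 - 1); set b := Num.sqrt (Y ^+ 2 - 1).
have a0 : 0 <= a := sqrtr_ge0 _; have b0 : 0 <= b := sqrtr_ge0 _.
have ha : a ^+ 2 = X ^+ 2 - 1 by rewrite sqr_sqrtr // subr_ge0 -(expr1n _ 2) ler_sqr ?nnegrE //; lra.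
have hb : b ^+ 2 = Y ^+ 2 - 1 by rewrite sqr_sqrtr // subr_ge0 -(expr1n _ 2) ler_sqr ?nnegrE //; lra.
set W := X * Y + a * b.
have W1 : 1 <= W by apply: le_trans Z1 hZ.
apply: le_trans (_ : hacosh W <= _); first by rewrite hacosh_le.
have eW : W ^+ 2 - 1 = (X * b + Y * a) ^+ 2.
  have : W ^+ 2 - 1 - (X * b + Y * a) ^+ 2 = (X ^+ 2 - a ^+ 2) * (Y ^+ 2 - b ^+ 2) - 1.
    by rewrite /W; ring.
  rewrite ha hb => h; apply/eqP; rewrite -subr_eq0 h; apply/eqP; ring.
rewrite /hacosh -/W eW sqrtr_sqr ger0_norm; last by apply: addr_ge0; apply: mulr_ge0; lra.
have -> : W + (X * b + Y * a) = (X + a) * (Y + b) by rewrite /W; ring.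
by rewrite lnM // posrE; lra.
Qed.

Lemma hacosh_exp (e : R) : 0 < e -> hacosh ((expR e + (expR e)^-1) / 2) = e.
Proof.
move=> e0; have z1 : 1 < expR e by rewrite expR_gt1.
set z := expR e in z1 *.
have z0 : 0 < z by lra.
have zi : z^-1 < 1 by rewrite invf_lt1.
set c := (z + z^-1) / 2; set s := (z - z^-1) / 2.
have hc : c ^+ 2 - 1 = s ^+ 2 by rewrite /c /s; field; rewrite gt_eqF.
rewrite /hacosh hc sqrtr_sqr ger0_norm; last by rewrite /s; lra.
have -> : c + s = z by rewrite /c /s; field; rewrite gt_eqF.
by rewrite /z expRK.
Qed.

End Hacosh.

Section HypVec.
Variables (R : realType) (d : nat).
Local Notation V := 'rV[R]_d.+1.
Local Notation L := (@lorentz R d).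

Lemma L_proj (x y : V) : L y y = -1 -> L (x + L x y *: y) y = 0.
Proof. by move=> hy; rewrite LDl LZl hy; ring. Qed.

Lemma L_proj_dot (x y z : V) : L y y = -1 ->
  L (x + L x y *: y) (z + L z y *: y) = L x z + L x y * L z y.
Proof. by move=> hy; rewrite !LDl !LDr !LZl !LZr hy (LC y z); ring. Qed.

Lemma L_cs_perp (y a b : V) : L y y = -1 -> L a y = 0 -> L b y = 0 ->
  L a b ^+ 2 <= L a a * L b b.
Proof.
move=> hy ha hb; apply: quad_disc; first exact: (L_pd hy hb).1.
move=> t; have hab : L (a + t *: b) y = 0 by rewrite LDl LZl ha hb; ring.
have := (L_pd hy hab).1; rewrite !LDl !LDr !LZl !LZr (LC b a).
by move=> h; apply: le_trans h _; rewrite le_eqVlt; apply/orP; left; apply/eqP; ring.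
Qed.

Lemma rcs_vec (x y : V) : L x x = -1 -> L y y = -1 -> 0 < a0 x -> 0 < a0 y ->
  L x y <= -1 /\ (L x y = -1 -> x = y).
Proof.
move=> hx hy x0 y0.
set c := L x y.
pose w := x + c *: y.
have wy : L w y = 0 by apply: L_proj.
have ww : L w w = c ^+ 2 - 1.
  by rewrite /w L_proj_dot // hx -/c; ring.
have [pd1 pd2] := L_pd hy wy.
have cneg : c < 0.
  move: hx hy; rewrite /c !LS.
  set Sxx := dotv (Pr x) (Pr x); set Syy := dotv (Pr y) (Pr y); set Sxy := dotv (Pr x) (Pr y).
  move=> hx hy; have cs := cauchy_schwarz (Pr x) (Pr y); rewrite -/Sxx -/Syy -/Sxy in cs.
  have Sx0 : 0 <= Sxx := dotvv_ge0 _.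
  have Sy0 : 0 <= Syy := dotvv_ge0 _.
  have e1 : Sxx = a0 x ^+ 2 - 1 by rewrite expr2; lra.
  have e2 : Syy = a0 y ^+ 2 - 1 by rewrite expr2; lra.
  rewrite e1 e2 in cs.
  have p0 : 0 < a0 x * a0 y by apply: mulr_gt0.
  have h : Sxy ^+ 2 < (a0 x * a0 y) ^+ 2.
    apply: le_lt_trans cs _; rewrite exprMn; nra.
  have : Sxy < a0 x * a0 y.
    have [//|ge] := ltP Sxy (a0 x * a0 y).
    by move: h; rewrite ltNge ler_sqr ?nnegrE //; try lra; move=> /negP.
  lra.
split.
  have : 1 <= c ^+ 2 by move: pd1; rewrite ww; lra.
  nra.
move=> c1; have : L w w = 0 by rewrite ww c1; ring.
move=> /pd2; rewrite /w c1 scaleN1r => /eqP; rewrite subr_eq0 => /eqP.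
done.
Qed.

Definition e0v : V := delta_mx 0 ord0.
Definition Jv (v : V) : V := v - (2 * a0 v) *: e0v.

Lemma a0e0 : a0 e0v = 1. Proof. by rewrite /a0 mxE !eqxx. Qed.

Lemma dotv_e0 (a : V) : dotv e0v a = a0 a.
Proof.
rewrite dotv_split a0e0 mul1r big1 ?addr0 // => i hi.
by rewrite /e0v mxE (negbTE hi) andbF mul0r.
Qed.

Lemma dotv_J (v a : V) : dotv (Jv v) a = L v a.
Proof. rewrite /Jv dotvBl dotvZl dotv_e0 LE; ring. Qed.

Lemma L_J (v a : V) : L (Jv v) a = dotv v a.
Proof.
rewrite LE dotv_J LE /Jv a0B a0Z a0e0; ring.
Qed.

Lemma u0_bound (x u : V) : L x x = -1 -> L u u = 1 -> L u x = 0 -> 0 < a0 x ->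
  - a0 x < a0 u.
Proof.
rewrite !LS => hx hu hux x0.
have cs := cauchy_schwarz (Pr u) (Pr x).
have Sx0 := dotvv_ge0 (Pr x); have Su0 := dotvv_ge0 (Pr u).
have e1 : dotv (Pr x) (Pr x) = a0 x ^+ 2 - 1 by rewrite expr2; lra.
have e2 : dotv (Pr u) (Pr u) = 1 + a0 u ^+ 2 by rewrite expr2; lra.
have e3 : dotv (Pr u) (Pr x) = a0 u * a0 x by lra.
rewrite e1 e2 e3 in cs.
have h : a0 u ^+ 2 < a0 x ^+ 2 by nra.
nra.
Qed.

End HypVec.

Lemma LQ (R : realType) d (c : R) (a : 'rV[R]_d.+1) :
  lorentz (c *: a) (c *: a) = c ^+ 2 * lorentz a a.
Proof. by rewrite LZl LZr; ring. Qed.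

Section Hyp.
Variables (R : realType) (d : nat).
Local Notation T := (mpoint R Hyperbolic d).
Local Notation dst := (@geo_dist R Hyperbolic d).
Local Notation L := (@lorentz R d).

Lemma hy_dist (x y : T) : dst x y = hacosh (- L (sval x) (sval y)).
Proof. by []. Qed.

Lemma hy_pt (x : T) : L (sval x) (sval x) = -1 /\ 0 < a0 (sval x).
Proof. exact: (proj2_sig x). Qed.

Lemma hy_rcs (x y : T) : L (sval x) (sval y) <= -1 /\ (L (sval x) (sval y) = -1 -> x = y).
Proof.
have [hx x0] := hy_pt x; have [hy y0] := hy_pt y.
have [h1 h2] := rcs_vec hx hy x0 y0; split => // e; apply: sval_inj; exact: h2.
Qed.

Lemma hy_ge1 (x y : T) : 1 <= - L (sval x) (sval y).
Proof. by have [h _] := hy_rcs x y; lra. Qed.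

Lemma hy_sym (x y : T) : dst x y = dst y x.
Proof. by rewrite !hy_dist LC. Qed.

Lemma hy_xx (x : T) : dst x x = 0.
Proof. by rewrite hy_dist (hy_pt x).1 opprK hacosh1. Qed.

Lemma real_aux (X Y Z : R) : 1 <= X -> 1 <= Y ->
  (Z - X * Y) ^+ 2 <= (X ^+ 2 - 1) * (Y ^+ 2 - 1) ->
  Z <= X * Y + Num.sqrt (X ^+ 2 - 1) * Num.sqrt (Y ^+ 2 - 1).
Proof.
move=> X1 Y1 h.
have hX : 0 <= X ^+ 2 - 1 by rewrite subr_ge0 -(expr1n _ 2) ler_sqr ?nnegrE //; lra.
rewrite -sqrtrM //.
have : `|Z - X * Y| <= Num.sqrt ((X ^+ 2 - 1) * (Y ^+ 2 - 1)).
  by rewrite -sqrtr_sqr ler_sqrt // mulr_ge0 // subr_ge0 -(expr1n _ 2) ler_sqr ?nnegrE //; lra.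
have := ler_norm (Z - X * Y); lra.
Qed.

Lemma hy_tri (x y z : T) : dst x z <= dst x y + dst y z.
Proof.
rewrite !hy_dist.
have [hx _] := hy_pt x; have [hy _] := hy_pt y; have [hz _] := hy_pt z.
have h := L_cs_perp hy (L_proj (sval x) hy) (L_proj (sval z) hy).
rewrite !L_proj_dot // hx hz (LC (sval z) (sval y)) in h.
apply: hacosh_add; try exact: hy_ge1.
apply: real_aux; try exact: hy_ge1.
move: h; set a := L (sval x) (sval y); set b := L (sval y) (sval z).
set c := L (sval x) (sval z).
have -> : (- c - - a * - b) ^+ 2 = (c + a * b) ^+ 2 by ring.
have -> : ((- a) ^+ 2 - 1) * ((- b) ^+ 2 - 1) = (-1 + a * a) * (-1 + b * b) by ring.
done.
Qed.

Lemma hy_tie (x t p : T) : dst x t = dst x p -> L (sval x) (sval t) = L (sval x) (sval p).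
Proof.
rewrite !hy_dist => /hacosh_inj h.
by have := h (hy_ge1 x t) (hy_ge1 x p) => /eqP; rewrite eqr_opp => /eqP.
Qed.

Lemma hy_pert (x : T) (v : 'rV[R]_d.+1) e : 0 < e -> exists y : T, dst x y < e /\
  forall t p : T, dst x t = dst x p ->
    Num.sg (dst y t - dst y p) = Num.sg (dotv v (sval p - sval t)).
Proof.
move=> e0; have [hx hx0] := hy_pt x.
pose v' := Jv v.
pose w := v' + L v' (sval x) *: sval x.
have wx : L w (sval x) = 0 by apply: L_proj.
have key : forall t p : T, dst x t = dst x p ->
    L w (sval p - sval t) = dotv v (sval p - sval t).
  move=> t p ht; rewrite /w LDl LZl [L (sval x) _]LBr (hy_tie ht) subrr mulr0 addr0.
  by rewrite /v' L_J.
have [w0|wn0] := eqVneq w 0.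
  exists x; split; first by rewrite hy_xx.
  by move=> t p ht; rewrite ht subrr -key // w0 L0l.
have [pd1 pd2] := L_pd hx wx.
have ww : 0 < L w w.
  rewrite lt_neqAle pd1 andbT; apply/eqP => h; move: wn0; by rewrite (pd2 (esym h)) eqxx.
pose nw := Num.sqrt (L w w).
have nw0 : 0 < nw by rewrite sqrtr_gt0.
pose u := nw^-1 *: w.
have uu : L u u = 1.
  by rewrite /u LZl LZr -(sqr_sqrtr (ltW ww)) -/nw; field; rewrite gt_eqF.
have ux : L u (sval x) = 0 by rewrite /u LZl wx mulr0.
have xu : L (sval x) u = 0 by rewrite LC.
have hwu : forall a, L u a = nw^-1 * L w a by move=> a; rewrite /u LZl.
have ub := u0_bound hx uu ux hx0.
clearbody u.
have e20 : 0 < e / 2 by rewrite divr_gt0.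
have z1 : 1 < expR (e / 2) by rewrite expR_gt1.
set z := expR (e / 2) in z1.
have z0 : 0 < z by lra.
have zi : z^-1 < 1 by rewrite invf_lt1.
have zi0 : 0 < z^-1 by rewrite invr_gt0.
pose c := (z + z^-1) / 2; pose s := (z - z^-1) / 2.
have s0 : 0 < s by rewrite /s; lra.
have cs : s < c by rewrite /s /c; lra.
have hcs : c ^+ 2 - s ^+ 2 = 1 by rewrite /c /s; field; rewrite gt_eqF.
pose yv := c *: sval x + s *: u.
have yy : L yv yv = -1.
  rewrite /yv !LDl !LDr !LZl !LZr hx uu xu ux.
  by apply: (@eq_trans _ _ (- (c ^+ 2 - s ^+ 2))); [ring | rewrite hcs].
have y0 : 0 < a0 yv.
  rewrite /yv a0D !a0Z.
  have : s * (- a0 (sval x)) < s * a0 u by rewrite ltr_pM2l.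
  have : s * a0 (sval x) < c * a0 (sval x) by rewrite ltr_pM2r.
  lra.
have hy : inspace (R := R) (k := Hyperbolic) (d := d) yv by split.
exists (exist _ yv hy : T); split.
  rewrite hy_dist /= /yv LDr !LZr hx xu mulr0 addr0 mulrN1 opprK.
  by rewrite /c /z hacosh_exp //; lra.
move=> t p ht; rewrite !hy_dist /= hacosh_sg; try exact: (hy_ge1 (exist _ yv hy : T) _).
have -> : - L yv (sval t) - - L yv (sval p) = L yv (sval p - sval t) by rewrite LBr; ring.
rewrite /yv LDl !LZl [L (sval x) _]LBr (hy_tie ht) subrr mulr0 add0r.
by rewrite hwu key // mulrA sg_pmul // mulr_gt0 // invr_gt0.
Qed.

Lemma hy_Qpos (p t : T) : t <> p -> 0 < L (sval p - sval t) (sval p - sval t).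
Proof.
move=> tp; have [h1 h2] := hy_rcs p t.
have hlt : L (sval p) (sval t) < -1.
  rewrite lt_neqAle h1 andbT; apply/eqP => e; apply: tp; exact: esym (h2 e).
rewrite LBl !LBr (LC (sval t) (sval p)) (hy_pt p).1 (hy_pt t).1; lra.
Qed.

Lemma hy_conv (x p : T) : exists v0 : 'rV[R]_d.+1,
  (forall t, dst x t = dst x p -> t <> p -> 0 < dotv v0 (sval p - sval t)) /\
  (forall t s, dst x t = dst x p -> dst x s = dst x p -> t <> p -> s <> p -> t <> s ->
     dotv v0 (sval p - sval s) *: (sval p - sval t) != dotv v0 (sval p - sval t) *: (sval p - sval s)).
Proof.
exists (Jv (sval p)).
apply: (@conv_of R T d.+1 (@proj1_sig _ _) (@sval_inj R Hyperbolic d) (fun t => dst x t = dst x p) p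
  (Jv (sval p)) (fun u => L u u) (fun c a => LQ c a)).
  by move=> t _ tp; apply: hy_Qpos.
move=> t _; rewrite dotv_J LBl !LBr (LC (sval t) (sval p)) (hy_pt p).1 (hy_pt t).1; lra.
Qed.

Lemma hy_hyp (p t : T) : p <> t -> model_hyperplane [set y : T | dst y t = dst y p].
Proof.
move=> pt; exists [set z : 'rV[R]_d.+1 | L (sval p - sval t) z = 0]; split.
  exists (sval p - sval t); split => //.
  by apply: hy_Qpos => e; apply: pt.
apply/seteqP; split => y /=; rewrite ?hy_dist.
  move=> /hacosh_inj h; have := h (hy_ge1 y t) (hy_ge1 y p).
  by rewrite LBl (LC (sval p)) (LC (sval t)) => ->; rewrite subrr.
by rewrite LBl (LC (sval p)) (LC (sval t)) => /eqP; rewrite subr_eq0 => /eqP ->.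
Qed.

End Hyp.

Local Close Scope card_scope.
Unset Implicit Arguments.

Theorem mainTheorem9 (R : realType) (k : geom) (d : nat)
    (G : set (mpoint R k d -> mpoint R k d)) (x0 : mpoint R k d)
    (hG : isometry_group (@geo_dist R k d) G)
    (hdisc : discontinuous_group (@geo_dist R k d) G)
    (hstab : trivial_stabilizer G x0)
    (n : nat) (hn : (1 <= n)%N) (hnS : card_le `I_n (gorbit G x0)) :
  let B := brillouin (@geo_dist R k d) (gorbit G x0) n x0 in
  [/\ fundamental_domain (@geo_dist R k d) G B,
      (exists2 HH : set (set (mpoint R k d)),
         (forall H, HH H -> model_hyperplane H) /\ locally_finite (@geo_dist R k d) HH
       & mboundary (@geo_dist R k d) B `<=` \bigcup_(H in HH) H)
    & mboundary (@geo_dist R k d) B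
        = mboundary (@geo_dist R k d) (minterior (@geo_dist R k d) B)].
Proof.
case: k G x0 hG hdisc hstab hnS => G x0 hG hdisc hstab hnS.
- apply: (@generic_main R (mpoint R Euclid d) _ (@eu_sym R d) (@eu_xx R d) (@eu_tri R d)
    G x0 hG hdisc hstab n hn hnS d (@proj1_sig _ _) (@sval_inj R Euclid d)
    (@eu_pert R d) (@eu_conv R d) (@model_hyperplane R Euclid d) (@eu_hyp R d)).
- apply: (@generic_main R (mpoint R Sphere d) _ (@sp_sym R d) (@sp_xx R d) (@sp_tri R d)
    G x0 hG hdisc hstab n hn hnS d.+1 (@proj1_sig _ _) (@sval_inj R Sphere d)
    (@sp_pert R d) (@sp_conv R d) (@model_hyperplane R Sphere d) (@sp_hyp R d)).
- apply: (@generic_main R (mpoint R Hyperbolic d) _ (@hy_sym R d) (@hy_xx R d) (@hy_tri R d)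
    G x0 hG hdisc hstab n hn hnS d.+1 (@proj1_sig _ _) (@sval_inj R Hyperbolic d)
    (@hy_pert R d) (@hy_conv R d) (@model_hyperplane R Hyperbolic d) (@hy_hyp R d)).
Qed.
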